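(* Let $a,b,c\in\mathbb{R}$ be such that the matrix $$B=\begin{pmatrix}1&a&b\\ a&1&c\\ b&c&1\end{pmatrix}$$ is positive semidefinite. Let $\mathbb{I}\subseteq[0,\infty)$ be an interval and let $f:\mathbb{I}\to[-1,1]$ be a strictly decreasing function with range exactly $[-1,1]$. Suppose that $$f(p+q)=f(p)f(q)-\sqrt{1-f(p)^2}\,\sqrt{1-f(q)^2}$$ for all $p,q$ with $p,q,p+q\in\mathbb{I}$. Then for every arrangement $(x,y,z)$ of $(a,b,c)$, $$f^{-1}(x)\le f^{-1}(y)+f^{-1}(z).$$
   Context: Positive semidefinite means symmetric (Hermitian) with nonnegative quadratic form. $f^{-1}$ denotes the inverse function of $f$, defined on $[-1,1]$. *)

(* Defs.v *)
From Stdlib Require Import Reals Lra Permutation List.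
Open Scope R_scope.

Definition matB (a b c : R) (i j : nat) : R :=
  match i, j with
  | 0, 0 => 1 | 0, 1 => a | 0, 2 => b
  | 1, 0 => a | 1, 1 => 1 | 1, 2 => c
  | 2, 0 => b | 2, 1 => c | 2, 2 => 1
  | _, _ => 0
  end.

(* Positive semidefinite 3x3 real matrix: symmetric with nonnegative
   quadratic form.  sum_f_R0 g 2 = g 0 + g 1 + g 2. *)
Definition psd3 (M : nat -> nat -> R) : Prop :=
  (forall i j, (i < 3)%nat -> (j < 3)%nat -> M i j = M j i) /\
  (forall x : nat -> R,
     0 <= sum_f_R0 (fun i => sum_f_R0 (fun j => x i * M i j * x j) 2) 2).

Definition is_interval (I : R -> Prop) : Prop :=
  forall x y z, I x -> I z -> x <= y <= z -> I y.

(* Main.v *)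
Require Import Defs.
From Stdlib Require Import Reals Permutation List Lra Psatz.
Open Scope R_scope.

Definition Qf (x y z v0 v1 v2 : R) : R :=
  v0*v0 + v1*v1 + v2*v2 + 2*x*v0*v1 + 2*y*v0*v2 + 2*z*v1*v2.

Lemma key (x y z : R) (hy : -1 <= y <= 1) (hz : -1 <= z <= 1)
  (hQ : forall v0 v1 v2, 0 <= Qf x y z v0 v1 v2) :
  ~ (x < y*z - sqrt (1 - y^2) * sqrt (1 - z^2)).
Proof.
  intro Hlt.
  assert (Hy2 : 0 <= 1 - y^2) by nra.
  assert (Hz2 : 0 <= 1 - z^2) by nra.
  set (u := sqrt (1 - y^2)) in *.
  set (w := sqrt (1 - z^2)) in *.
  assert (Hu : u*u = 1 - y^2) by (apply sqrt_sqrt; exact Hy2).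
  assert (Hw : w*w = 1 - z^2) by (apply sqrt_sqrt; exact Hz2).
  assert (Hu0 : 0 <= u) by apply sqrt_pos.
  assert (Hw0 : 0 <= w) by apply sqrt_pos.
  destruct (Rle_lt_or_eq_dec 0 (u*w)) as [Hp|H0]; [nra| |].
  - pose proof (hQ w u (-(y*w+z*u))) as H. unfold Qf in H.
    assert (E : w*w + u*u + (-(y*w+z*u))*(-(y*w+z*u)) + 2*x*w*u
              + 2*y*w*(-(y*w+z*u)) + 2*z*u*(-(y*w+z*u))
              = 2*u*w*(u*w+x-y*z)) by (rewrite <- (Rmult_1_l (w*w)) at 1; nra).
    rewrite E in H. nra.
  - assert (Hor : u = 0 \/ w = 0) by (apply Rmult_integral; lra).
    destruct Hor as [Hu1|Hw1].
    + pose proof (hQ 1 (y*z - x) (-y)) as H. unfold Qf in H.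
      rewrite Hu1 in Hu. nra.
    + pose proof (hQ (y*z - x) 1 (-z)) as H. unfold Qf in H.
      rewrite Hw1 in Hw. nra.
Qed.

Lemma perm3 (x y z a b c : R) :
  Permutation (x :: y :: z :: nil) (a :: b :: c :: nil) ->
  (x = a /\ y = b /\ z = c) \/ (x = a /\ y = c /\ z = b) \/
  (x = b /\ y = a /\ z = c) \/ (x = b /\ y = c /\ z = a) \/
  (x = c /\ y = a /\ z = b) \/ (x = c /\ y = b /\ z = a).
Proof.
  intro HP.
  assert (Ha : In a (x :: y :: z :: nil)).
  { apply (Permutation_in a (Permutation_sym HP)). simpl; auto. }
  simpl in Ha. destruct Ha as [E|[E|[E|[]]]]; subst a.
  - apply Permutation_cons_inv in HP.
    apply Permutation_length_2 in HP. destruct HP as [[-> ->]|[-> ->]]; tauto.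
  - assert (HP' : Permutation (y :: x :: z :: nil) (y :: b :: c :: nil)).
    { eapply Permutation_trans; [apply perm_swap|exact HP]. }
    apply Permutation_cons_inv in HP'.
    apply Permutation_length_2 in HP'. destruct HP' as [[-> ->]|[-> ->]]; tauto.
  - assert (HP' : Permutation (z :: x :: y :: nil) (z :: b :: c :: nil)).
    { eapply Permutation_trans; [|exact HP].
      eapply Permutation_trans; [apply perm_swap|]. apply perm_skip, perm_swap. }
    apply Permutation_cons_inv in HP'.
    apply Permutation_length_2 in HP'. destruct HP' as [[-> ->]|[-> ->]]; tauto.
Qed.

Theorem proposition1 (a b c : R) (I : R -> Prop) (f : R -> R)
  (hB : psd3 (matB a b c))
  (hI : is_interval I)
  (hI0 : forall p, I p -> 0 <= p)
  (hdec : forall p q, I p -> I q -> p < q -> f q < f p)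
  (hrange_in : forall p, I p -> -1 <= f p <= 1)
  (hrange_onto : forall y, -1 <= y <= 1 -> exists p, I p /\ f p = y)
  (hfe : forall p q, I p -> I q -> I (p + q) ->
     f (p + q) = f p * f q - sqrt (1 - (f p) ^ 2) * sqrt (1 - (f q) ^ 2)) :
  forall x y z : R, Permutation (x :: y :: z :: nil) (a :: b :: c :: nil) ->
  forall px py pz : R,
    I px -> f px = x -> I py -> f py = y -> I pz -> f pz = z ->
    px <= py + pz.
Proof.
  intros x y z HP px py pz Ipx Fx Ipy Fy Ipz Fz.
  destruct hB as [_ hQ0].
  assert (hQ : forall v0 v1 v2, 0 <= Qf a b c v0 v1 v2).
  { intros v0 v1 v2.
    pose proof (hQ0 (fun i => match i with 0%nat => v0 | 1%nat => v1 | _ => v2 end)) as H.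
    simpl in H. unfold Qf. lra. }
  assert (hQ' : forall v0 v1 v2, 0 <= Qf x y z v0 v1 v2).
  { apply perm3 in HP. intros v0 v1 v2.
    destruct HP as [[-> [-> ->]]|[[-> [-> ->]]|[[-> [-> ->]]|[[-> [-> ->]]|[[-> [-> ->]]|[-> [-> ->]]]]]]];
    unfold Qf in *;
    first [ specialize (hQ v0 v1 v2); lra
          | specialize (hQ v1 v0 v2); lra
          | specialize (hQ v0 v2 v1); lra
          | specialize (hQ v2 v1 v0); lra
          | specialize (hQ v1 v2 v0); lra
          | specialize (hQ v2 v0 v1); lra ]. }
  destruct (Rle_or_lt px (py + pz)) as [H|H]; [exact H|exfalso].
  assert (Isum : I (py + pz)).
  { apply (hI py (py+pz) px); auto. pose proof (hI0 pz Ipz). lra. }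
  pose proof (hfe py pz Ipy Ipz Isum) as E.
  pose proof (hdec _ _ Isum Ipx H) as D.
  rewrite E, Fx, Fy, Fz in D.
  apply (key x y z); auto.
  - rewrite <- Fy; auto.
  - rewrite <- Fz; auto.
Qed.
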